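(* Let $\Gamma_1,\Gamma_2$ be finite connected graphs whose normalized Laplacians have a common eigenvalue $\lambda$, with eigenfunctions $f^1$ on $\Gamma_1$ and $f^2$ on $\Gamma_2$. Assume $f^1(p_1)=0$ and $f^2(p_2)=0$ for some vertices $p_1\in\Gamma_1$, $p_2\in\Gamma_2$. Let $\Gamma$ be the graph obtained from the disjoint union of $\Gamma_1$ and $\Gamma_2$ by identifying $p_1$ with $p_2$. Then $\lambda$ is an eigenvalue of the normalized Laplacian of $\Gamma$, with an eigenfunction equal to $f^1$ on $\Gamma_1$ and to $f^2$ on $\Gamma_2$.
   Context: For a finite simple graph without isolated vertices, write $i\sim j$ for adjacency and $n_i$ for the degree of $i$. The normalized Laplacian acts on real functions $v$ on the vertices by $\Delta v(i)=v(i)-\frac{1}{n_i}\sum_{j\sim i}v(j)$; $\lambda$ is an eigenvalue with eigenfunction $u$ if $u\not\equiv 0$ and $\frac{1}{n_i}\sum_{j\sim i}u(j)=(1-\lambda)u(i)$ for all $i$. *)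

(* Defs.v *)
From mathcomp Require Import all_boot all_order all_algebra.
Set Implicit Arguments. Unset Strict Implicit. Unset Printing Implicit Defensive.
Import Order.TTheory GRing.Theory Num.Theory.
Local Open Scope ring_scope.

Definition simple_graph (V : finType) (e : rel V) : Prop :=
  symmetric e /\ irreflexive e.

Definition connected_graph (V : finType) (e : rel V) : Prop :=
  forall x y : V, connect e x y.

Definition no_isolated (V : finType) (e : rel V) : Prop :=
  forall x : V, exists y, e x y.

Definition deg (V : finType) (e : rel V) (i : V) : nat := #|[pred j | e i j]|.

(* lam is an eigenvalue of the normalized Laplacian with eigenfunction u:
   u not identically zero and (1/n_i) sum_{j ~ i} u j = (1 - lam) u i. *)
Definition nl_eigenfunction (R : fieldType) (V : finType) (e : rel V)
    (lam : R) (u : V -> R) : Prop :=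
  (exists i, u i != 0) /\
  forall i : V, ((deg e i)%:R)^-1 * (\sum_(j | e i j) u j) = (1 - lam) * u i.

(* Gluing: vertices of Gamma_1, plus vertices of Gamma_2 other than p2;
   p2 is identified with p1. *)
Definition glue_vert (V1 V2 : finType) (p2 : V2) : finType :=
  (V1 + {x : V2 | x != p2})%type.

Definition glue_in2 (V1 V2 : finType) (p1 : V1) (p2 : V2) (b : V2)
  : glue_vert V1 p2 :=
  match insub b with
  | Some b' => inr b'
  | None => inl p1
  end.

Definition glue_rel (V1 V2 : finType) (e1 : rel V1) (e2 : rel V2)
    (p1 : V1) (p2 : V2) : rel (glue_vert V1 p2) :=
  fun x y =>
    match x, y with
    | inl a, inl b => e1 a b
    | inl a, inr b => (a == p1) && e2 p2 (val b)
    | inr a, inl b => (b == p1) && e2 (val a) p2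
    | inr a, inr b => e2 (val a) (val b)
    end.

Arguments glue_in2 {V1 V2} p1 p2 b.
Arguments glue_vert V1 {V2} p2.
Arguments glue_rel {V1 V2} e1 e2 p1 p2.

(* Main.v *)
Require Import Defs.
From mathcomp Require Import all_boot all_order all_algebra.
Import Order.TTheory GRing.Theory Num.Theory.
Local Open Scope ring_scope.

Section Glue.
Variables (R : realFieldType) (V1 V2 : finType) (e1 : rel V1) (e2 : rel V2)
  (p1 : V1) (p2 : V2).

Definition gl (G1 : V1 -> R) (G2 : V2 -> R) (x : glue_vert V1 p2) : R :=
  match x with inl a => G1 a | inr b => G2 (val b) end.

Lemma sum_subp (P : pred V2) (G : V2 -> R) :
  \sum_(b : {x : V2 | x != p2} | P (val b)) G (val b) =
  \sum_(x | (x != p2) && P x) G x.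
Proof.
symmetry.
rewrite (reindex_omap (val : {x : V2 | x != p2} -> V2) insub); last first.
  by move=> i /andP[iA Pi]; rewrite insubT.
by apply: eq_bigl=> -[i iA]/=; rewrite insubT ?iA /= eqxx andbT.
Qed.

Lemma sum_split2 (P : pred V2) (G : V2 -> R) :
  \sum_(x | P x) G x = \sum_(x | (x != p2) && P x) G x + (if P p2 then G p2 else 0).
Proof.
case: (boolP (P p2)) => Pp.
  rewrite (bigD1 p2) //= addrC; congr (_ + _); apply: eq_bigl => x; exact: andbC.
rewrite addr0; apply: eq_bigl => x; case: eqP => [->|//]; by rewrite (negbTE Pp).
Qed.

Lemma glue_inl (G1 : V1 -> R) (G2 : V2 -> R) (a : V1) :
  ~~ e2 p2 p2 ->
  \sum_(j | glue_rel e1 e2 p1 p2 (inl a) j) gl G1 G2 j =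
  \sum_(j | e1 a j) G1 j + (if a == p1 then \sum_(j | e2 p2 j) G2 j else 0).
Proof.
move=> irr.
rewrite big_sumType /=; congr (_ + _).
case: eqP => [_|_]; last by rewrite big_pred0.
by rewrite sum_subp [RHS]sum_split2 (negbTE irr) addr0; apply: eq_bigl => x.
Qed.

Lemma glue_inr (G1 : V1 -> R) (G2 : V2 -> R) b :
  G1 p1 = G2 p2 ->
  \sum_(j | glue_rel e1 e2 p1 p2 (inr b) j) gl G1 G2 j =
  \sum_(j | e2 (val b) j) G2 j.
Proof.
move=> E.
rewrite big_sumType /= sum_subp (sum_split2 (e2 (val b))) addrC; congr (_ + _).
case: (boolP (e2 (val b) p2)) => h.
  rewrite (bigD1 p1) ?eqxx //= big1 ?addr0 // => i /andP[/andP[/eqP -> _] ne].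
  by rewrite eqxx in ne.
by rewrite big1 // => i /andP[_ ].
Qed.

Lemma degR (V : finType) (e : rel V) i : (deg e i)%:R = \sum_(j | e i j) (1 : R).
Proof. by rewrite /deg -sum1_card natr_sum. Qed.

End Glue.

Theorem theorem6 (R : realFieldType) (V1 V2 : finType)
    (e1 : rel V1) (e2 : rel V2)
    (simple1 : simple_graph e1) (simple2 : simple_graph e2)
    (conn1 : connected_graph e1) (conn2 : connected_graph e2)
    (noiso1 : no_isolated e1) (noiso2 : no_isolated e2)
    (lam : R) (f1 : V1 -> R) (f2 : V2 -> R)
    (ef1 : nl_eigenfunction e1 lam f1) (ef2 : nl_eigenfunction e2 lam f2)
    (p1 : V1) (p2 : V2) (z1 : f1 p1 = 0) (z2 : f2 p2 = 0) :
  exists f : glue_vert V1 p2 -> R,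
    nl_eigenfunction (glue_rel e1 e2 p1 p2) lam f /\
    (forall a : V1, f (inl a) = f1 a) /\
    (forall b : V2, f (glue_in2 p1 p2 b) = f2 b).
Proof.
have irr : ~~ e2 p2 p2 by case: simple2 => _ ->.
have one : forall (V : finType) (e : rel V) (f : V -> R) p,
    no_isolated e -> nl_eigenfunction e lam f -> f p = 0 ->
    \sum_(j | e p j) f j = 0.
  move=> V e f p noiso [_ E] fp.
  have := E p; rewrite fp mulr0 => /eqP; rewrite mulf_eq0 invr_eq0 => /orP[|/eqP //].
  rewrite pnatr_eq0 /deg => /eqP /card0_eq Hc.
  by case: (noiso p) => y /= hy; move: (Hc y); rewrite inE hy.
exists (@gl R V1 V2 p2 f1 f2); split; last split.
- split.
    by case: ef1 => [[i hi] _]; exists (inl i).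
  case=> [a|b].
    have Hd : (deg (glue_rel e1 e2 p1 p2) (inl a))%:R = \sum_(j | glue_rel e1 e2 p1 p2 (inl a) j) @gl R V1 V2 p2 (fun _ => 1) (fun _ => 1) j.
      by rewrite degR; apply: eq_bigr => -[].
    rewrite (@glue_inl _ _ _ e1 e2 p1 _ (fun _ => 1) (fun _ => 1) a irr) in Hd.
    rewrite Hd (@glue_inl _ _ _ e1 e2 p1 _ f1 f2 a irr) /=.
    case: eqP => [->|_].
      by rewrite (one _ e1 f1 p1 noiso1 ef1 z1) (one _ e2 f2 p2 noiso2 ef2 z2) z1 addr0 !mulr0.
    by rewrite !addr0 -(@degR R V1 e1 a); case: ef1 => _ ->.
  have Hd : (deg (glue_rel e1 e2 p1 p2) (inr b))%:R = \sum_(j | glue_rel e1 e2 p1 p2 (inr b) j) @gl R V1 V2 p2 (fun _ => 1) (fun _ => 1) j.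
    by rewrite degR; apply: eq_bigr => -[].
  rewrite (@glue_inr _ _ _ e1 e2 p1 _ (fun _ => 1) (fun _ => 1) b) // in Hd.
  by rewrite Hd (@glue_inr _ _ _ e1 e2 p1 _ f1 f2 b) /= ?z1 ?z2 // -(@degR R V2 e2 (val b)); case: ef2 => _ ->.
- by [].
- move=> b; rewrite /glue_in2; case: insubP => [u _ <-|] //=.
  by rewrite negbK => /eqP ->; rewrite z1 z2.
Qed.
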